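(* Let $n\ge1$ and let $T\in\mathbb R[x,u_0,\dots,u_n]$ be nonzero. Write $T=Q(x,v_0,\dots,v_n)$ with $Q$ a real polynomial, and let $m$ be the degree of $Q$ in the variable $x$. Then $T(\mathcal P_n)\subset\mathcal P_m$ and $T(\mathcal P_n)\not\subset\mathcal P_{m-1}$; i.e. $T$ has deficiency $n-m$ relative to $\mathcal P_n$.
   Context: Elements $P\in\mathbb R[x,u_0,\dots,u_n]$ act on smooth $f$ by $P[f](x)=P(x,f(x),f'(x),\dots,f^{(n)}(x))$. $\mathcal P_s$ is the space of real polynomials in $x$ of degree $\le s$ ($\mathcal P_s=\{0\}$ for $s<0$). Deficiency $m$ relative to $\mathcal P_n$ means $T(\mathcal P_n)\subset\mathcal P_{n-m}$ but $T(\mathcal P_n)\not\subset\mathcal P_{n-m-1}$. For $j=0,\dots,n$, $v_j=\sum_{i=0}^{n-j}(-1)^i\frac{x^i}{i!}u_{i+j}$; the elements $x,v_0,\dots,v_n$ freely generate the algebra $\mathbb R[x,u_0,\dots,u_n]$, so $Q$ is unique. *)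

(* Defs.v *)
From Stdlib Require Import Rdefinitions.
From HB Require Import structures.
From mathcomp Require Import all_boot all_order all_algebra.
From mathcomp Require Import mpoly.
From mathcomp Require Import Rstruct.
Set Implicit Arguments. Unset Strict Implicit. Unset Printing Implicit Defensive.
Import Order.TTheory GRing.Theory Num.Theory.
Local Open Scope ring_scope.

(* The algebra R[x,u_0,...,u_n] is {mpoly R[n.+2]}: variable 0 is x,
   variable (i+1) is u_i. *)
Notation diffpoly n := {mpoly R[n.+2]}.

Definition xvar (n : nat) : diffpoly n := 'X_(@ord0 n.+1).
Definition uvar (n i : nat) : diffpoly n := 'X_(inord i.+1).

Definition vvar (n j : nat) : diffpoly n :=
  \sum_(i < (n - j).+1)
     ((-1) ^+ i / (i`!)%:R) *: (xvar n ^+ i * uvar n (i + j)).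

Definition subst_xv (n : nat) (Q : diffpoly n) : diffpoly n :=
  Q \mPo [tuple (if i == 0%N :> nat then xvar n else vvar n i.-1)
          | i < n.+2].

Definition degx (n : nat) (Q : diffpoly n) : nat :=
  \max_(mm <- msupp Q) mm (@ord0 n.+1).

(* Action of P on a (polynomial) function f:
   P[f](x) = P(x, f(x), f'(x), ..., f^(n)(x)), computed as a polynomial. *)
Definition act (n : nat) (P : diffpoly n) (f : {poly R}) : {poly R} :=
  mmap (@polyC R)
    (fun i : 'I_n.+2 => if val i == 0%N then 'X else f^`((val i).-1)) P.

(* P_s = real polynomials of degree <= s; P_s = {0} for s < 0.
   Membership in P_(s-1) for s : nat is written [size f <= s]. *)
Definition inP (s : nat) (f : {poly R}) : Prop := (size f <= s.+1)%N.

(* Main.v *)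
Require Import Defs.
From Stdlib Require Import Rdefinitions.
From HB Require Import structures.
From mathcomp Require Import all_boot all_order all_algebra.
From mathcomp Require Import mpoly.
From mathcomp Require Import Rstruct.
From mathcomp Require Import ring.
Set Implicit Arguments. Unset Strict Implicit. Unset Printing Implicit Defensive.
Import Order.TTheory GRing.Theory Num.Theory.
Local Open Scope ring_scope.

Section Uniq.
Context (k : nat) (K : comRingType) (S : comRingType).

Lemma rmorph_mpolyE (phi : {rmorphism {mpoly K[k]} -> S}) (p : {mpoly K[k]}) :
  phi p = mmap (phi \o (@mpolyC k K)) (fun i => phi 'X_i) p.
Proof.
rewrite {1}(mpolyE p) rmorph_sum /mmap; apply: eq_bigr => m _.
rewrite -mul_mpolyC rmorphM /= /mmap1 mpolyXE_id rmorph_prod.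
by congr (_ * _); apply: eq_bigr => i _; rewrite rmorphXn.
Qed.

Lemma rmorph_mpoly_eq (phi psi : {rmorphism {mpoly K[k]} -> S}) :
  (forall c, phi c%:MP = psi c%:MP) -> (forall i, phi 'X_i = psi 'X_i) ->
  phi =1 psi.
Proof.
move=> hC hX p; rewrite rmorph_mpolyE [RHS]rmorph_mpolyE.
rewrite /mmap; apply: eq_bigr => m _; rewrite /= hC; congr (_ * _).
by apply: mmap1_eq.
Qed.
End Uniq.

Lemma mmap_comp (k l : nat) (K S : comRingType) (f : {rmorphism K -> S})
  (h : 'I_l -> S) (lq : k.-tuple {mpoly K[l]}) (p : {mpoly K[k]}) :
  mmap f h (p \mPo lq) = mmap f (fun i => mmap f h (tnth lq i)) p.
Proof.
pose phi := (mmap f h \o comp_mpoly lq).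
pose psi := (mmap f (fun i => mmap f h (tnth lq i))).
have := @rmorph_mpoly_eq k K S phi psi.
apply.
- by move=> c; rewrite /phi /psi /= comp_mpolyC !mmapC.
- by move=> i; rewrite /phi /psi /= comp_mpolyXU -tnth_nth mmapX mmap1U.
Qed.

Lemma poly_eq0_all (r : {poly R}) : (forall t, r.[t] = 0) -> r = 0.
Proof.
move=> h; apply: (@roots_geq_poly_eq0 _ r [seq i%:R | i <- iota 0 (size r)]).
- by apply/allP => x /mapP [i _ ->]; rewrite /root h.
- rewrite map_inj_uniq ?iota_uniq // => i j /eqP; rewrite eqr_nat => /eqP.
  by [].
- by rewrite size_map size_iota.
Qed.

Section Split.
Context (k : nat).
Definition wid (j : 'I_k) : 'I_k.+1 := widen_ord (leqnSn k) j.

Definition hs (i : 'I_k.+1) : {poly {mpoly R[k]}} :=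
  if unlift ord_max i is Some j then ('X_j)%:P else 'X.

Definition sigm (p : {mpoly R[k.+1]}) : {poly {mpoly R[k]}} :=
  mmap (polyC \o (@mpolyC k R)) hs p.

Definition psim : {poly {mpoly R[k]}} -> {mpoly R[k.+1]} :=
  horner_eval ('X_ord_max) \o map_poly (mmap (@mpolyC k.+1 R) (fun j => 'X_(wid j))).

Lemma widen_lift (j : 'I_k) : wid j = lift ord_max j.
Proof. by apply: val_inj; rewrite /= /bump leqNgt ltn_ord. Qed.

Lemma psim_sigm p : psim (sigm p) = p.
Proof.
have := @rmorph_mpoly_eq k.+1 R _ (psim \o sigm) idfun.
apply.
- move=> c; rewrite /psim /sigm /= mmapC /= map_polyC /= mmapC /=.
  by rewrite /horner_eval hornerC.
- move=> i; rewrite /psim /sigm /= mmapX mmap1U /hs.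
  case: unliftP => [j ->|->].
  + by rewrite map_polyC /= mmapX mmap1U /horner_eval hornerC widen_lift.
  + by rewrite map_polyX /horner_eval hornerX.
Qed.

Lemma meval_sigm (v : 'I_k.+1 -> R) p :
  p.@[v] = (map_poly (meval (fun j => v (wid j))) (sigm p)).[v ord_max].
Proof.
have := @rmorph_mpoly_eq k.+1 R _ (meval v)
  (horner_eval (v ord_max) \o map_poly (meval (fun j => v (wid j))) \o sigm).
apply.
- move=> c; rewrite /sigm /= mevalC mmapC /= map_polyC /= mevalC.
  by rewrite /horner_eval hornerC.
- move=> i; rewrite /sigm /= mevalXU mmapX mmap1U /hs.
  case: unliftP => [j ->|->].
  + by rewrite map_polyC /= mevalXU /horner_eval hornerC widen_lift.
  + by rewrite map_polyX /horner_eval hornerX.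
Qed.
End Split.

Lemma mpoly_vanish (k : nat) (p : {mpoly R[k]}) :
  (forall v, p.@[v] = 0) -> p = 0.
Proof.
elim: k p => [|k IH] p hp.
  have := @rmorph_mpoly_eq 0 R _ (@mpolyC 0 R \o meval (fun=> 0)) idfun.
  move=> e; rewrite -[p](e _ _ p) /= ?hp //.
  - by move=> c /=; rewrite mevalC.
  - by case.
rewrite -(psim_sigm p).
suff -> : sigm p = 0 by rewrite /psim /= map_poly0 /horner_eval horner0.
apply/polyP => j; rewrite coef0; apply: IH => w.
pose v (i : 'I_k.+1) := if unlift ord_max i is Some j then w j else 0.
have hw : (fun j => v (wid j)) =1 w.
  by move=> j'; rewrite /v widen_lift liftK.
have r0 : map_poly (meval w) (sigm p) = 0.
  apply: poly_eq0_all => t.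
  pose v' (i : 'I_k.+1) := if unlift ord_max i is Some j then w j else t.
  have hw' : (fun j => v' (wid j)) =1 w.
    by move=> j'; rewrite /v' widen_lift liftK.
  have := meval_sigm v' p; rewrite hp (@eq_map_poly _ _ _ (meval w) (fun q => meval_eq q hw')).
  by rewrite /v' unlift_none => <-.
by move/polyP: r0 => /(_ j); rewrite coef_map coef0.
Qed.
Section Deriv.
Variable K : numFieldType.

Lemma deriv0_const (p : {poly K}) : p^`() = 0 -> p = (p`_0)%:P.
Proof.
move=> h; apply/polyP => i; rewrite coefC; case: i => [|i] //=.
move/polyP: h => /(_ i) /eqP.
by rewrite coef_deriv coef0 mulrn_eq0 /= => /eqP.
Qed.

Definition tc (i : nat) : K := (-1) ^+ i / (i`!)%:R.

Lemma tcS i : tc i.+1 * i.+1%:R = - tc i.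
Proof.
rewrite /tc factS natrM exprS.
have h1 : (i.+1%:R : K) != 0 by rewrite pnatr_eq0.
have h2 : ((i`!)%:R : K) != 0 by rewrite pnatr_eq0 -lt0n fact_gt0.
rewrite invfM.
field.
by rewrite h2 addrC natr1.
Qed.



Lemma taylor (g : {poly K}) N : g^`(N.+1) = 0 ->
  \sum_(i < N.+1) (tc i)%:P * ('X^i * g^`(i)) = (g.[0])%:P.
Proof.
move=> hN; set P := \sum_(i < N.+1) _.
have dP : P^`() = 0.
  rewrite /P raddf_sum /=.
  under eq_bigr => i _ do rewrite derivM derivC mul0r add0r derivM derivXn -derivnS mulrDr.
  rewrite big_split /= big_ord_recl /= mulr0n mul0r mulr0 add0r.
  under eq_bigr => i _ do rewrite /bump /= add1n add0n mulrnAl mulrnAr -mulrnAl -polyCMn -mulr_natr tcS polyCN mulNr.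
  rewrite sumrN big_ord_recr /= -derivnS hN !mulr0 addr0.
  by apply/eqP; rewrite addrC subr_eq0; apply/eqP; apply: eq_bigr.
rewrite (deriv0_const dP) /P coef_sum big_ord_recl /= big1 ?addr0.
  by rewrite coefCM coefXnM /= subn0 /tc expr0 fact0 divr1 mul1r horner_coef0.
by move=> i _; rewrite coefCM coefXnM /bump /= mulr0.
Qed.
End Deriv.

From mathcomp Require Import zify.
From Stdlib Require Import Lia.
Set Implicit Arguments. Unset Strict Implicit. Unset Printing Implicit Defensive.
Import Order.TTheory GRing.Theory Num.Theory.
Local Open Scope ring_scope.

Lemma mmap_eqh (k : nat) (K S : ringType) (f : K -> S) (h1 h2 : 'I_k -> S) p :
  h1 =1 h2 -> mmap f h1 p = mmap f h2 p.
Proof. by move=> e; apply: eq_bigr => m _; rewrite (mmap1_eq _ e). Qed.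

Definition hf (n : nat) (f : {poly R}) (i : 'I_n.+2) : {poly R} :=
  if val i == 0%N then 'X else f^`((val i).-1).

Lemma actE n (P : diffpoly n) f : act P f = mmap (@polyC R) (hf f) P.
Proof. by []. Qed.

Lemma act_x n (f : {poly R}) : act (xvar n) f = 'X.
Proof. by rewrite actE /xvar mmapX mmap1U. Qed.

Lemma derivn_add (p : {poly R}) i j : p^`(j)^`(i) = p^`(i + j).
Proof. by elim: i => [|i IH] //; rewrite !derivnS IH. Qed.

Lemma act_v n j (f : {poly R}) : (j <= n)%N -> (size f <= n.+1)%N ->
  act (vvar n j) f = (f^`(j).[0])%:P.
Proof.
move=> hj hs; rewrite actE /vvar rmorph_sum /=.
rewrite -(@taylor _ (f^`(j)) (n - j)); last first.
  by rewrite derivn_add addSn subnK // derivn_poly0.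
apply: eq_bigr => i _; rewrite mmapZ; congr (_ * _).
rewrite rmorphM rmorphXn /= /xvar /uvar !mmapX !mmap1U.
have hij : (i + j < n.+1)%N by have := ltn_ord i; lia.
by rewrite /hf /= inordK // derivn_add.
Qed.

Definition gc (n : nat) (c : nat -> R) (i : 'I_n.+2) : {poly R} :=
  if val i == 0%N then 'X else (c (val i).-1)%:P.

Lemma act_T n (Q : diffpoly n) (f : {poly R}) : (size f <= n.+1)%N ->
  act (subst_xv Q) f = mmap (@polyC R) (@gc n (fun j => f^`(j).[0])) Q.
Proof.
move=> hs; rewrite actE /subst_xv mmap_comp; apply: mmap_eqh => i.
rewrite tnth_mktuple -actE /gc; case: eqP => hi; first exact: act_x.
apply: act_v => //; have := ltn_ord i; lia.
Qed.

Definition em n (c : nat -> R) (m : 'X_{1..n.+2}) : R :=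
  \prod_(i < n.+1) c i ^+ m (lift ord0 i).

Lemma expand n (Q : diffpoly n) c : mmap (@polyC R) (@gc n c) Q =
  \sum_(m <- msupp Q) (Q@_m * em c m)%:P * 'X^(m ord0).
Proof.
apply: eq_bigr => m _; rewrite /mmap1 big_ord_recl /gc /=.
under eq_bigr => i _ do rewrite -rmorphXn.
by rewrite -rmorph_prod polyCM -mulrA [X in _ * X]mulrC.
Qed.

Lemma size_expand n (Q : diffpoly n) (a : 'X_{1..n.+2} -> R) :
  (size (\sum_(m <- msupp Q) (a m)%:P * 'X^(m ord0))%R <= (degx Q).+1)%N.
Proof.
apply: (leq_trans (size_sum _ _ _)); apply/bigmax_leqP_seq => m hm _.
rewrite mul_polyC (leq_trans (size_scale_leq _ _)) // size_polyXn ltnS.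
by rewrite /degx; apply: leq_bigmax_seq.
Qed.

Lemma coef_expand n (Q : diffpoly n) (a : 'X_{1..n.+2} -> R) M :
  (\sum_(m <- msupp Q) (a m)%:P * 'X^(m ord0))`_M =
  \sum_(m <- msupp Q | m ord0 == M) a m.
Proof.
rewrite coef_sum [RHS]big_mkcond /=; apply: eq_bigr => m _.
by rewrite coefCM coefXn eq_sym; case: eqP => _; rewrite ?mulr1 ?mulr0.
Qed.

Definition dropm n (m : 'X_{1..n.+2}) : 'X_{1..n.+1} :=
  [multinom m (lift ord0 i) | i < n.+1].

Definition Qx n (Q : diffpoly n) M : {mpoly R[n.+1]} :=
  \sum_(m <- msupp Q | m ord0 == M) Q@_m *: 'X_[dropm m].

Lemma meval_Qx n (Q : diffpoly n) M (c : nat -> R) :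
  (Qx Q M).@[fun i => c i] = \sum_(m <- msupp Q | m ord0 == M) Q@_m * em c m.
Proof.
rewrite /Qx rmorph_sum /=; apply: eq_bigr => m _.
rewrite (mevalZ (fun i : 'I_n.+1 => c i) (Q@_m)).
by rewrite mevalX; congr (_ * _); apply: eq_bigr => i _; rewrite mnmE.
Qed.

Lemma bigmax_attained (T : eqType) (s : seq T) (F : T -> nat) :
  s != [::] -> exists2 x, x \in s & \max_(y <- s) F y = F x.
Proof.
elim: s => [//|a s IH] _; rewrite big_cons.
case: (eqVneq s [::]) => [->|ne].
  by exists a; rewrite ?mem_seq1 // big_nil maxn0.
have [x hx ->] := IH ne.
case: (leqP (F x) (F a)) => h.
  by exists a; rewrite ?mem_head //; apply/maxn_idPl.
by exists x; rewrite ?inE ?hx ?orbT //; apply/maxn_idPr/ltnW.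
Qed.

Lemma dropm_inj n (m1 m2 : 'X_{1..n.+2}) :
  m1 ord0 = m2 ord0 -> dropm m1 = dropm m2 -> m1 = m2.
Proof.
move=> h0 hd; apply/mnmP => i; case: (unliftP ord0 i) => [j ->|->] //.
by have := congr1 (fun m : 'X_{1..n.+1} => m j) hd; rewrite !mnmE.
Qed.

Lemma Qx_neq0 n (Q : diffpoly n) : Q != 0 -> Qx Q (degx Q) != 0.
Proof.
rewrite -msupp_eq0 => hQ.
have [m0 hm0 hM] := bigmax_attained (fun mm : 'X_{1..n.+2} => mm ord0) hQ.
apply/eqP => /(congr1 (mcoeff (dropm m0))); rewrite mcoeff0 /Qx raddf_sum /=.
rewrite big_mkcond (bigD1_seq m0) //= ?msupp_uniq //.
rewrite /degx hM eqxx big1 ?addr0.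
  by rewrite mcoeffZ mcoeffX eqxx mulr1 => /eqP; rewrite mcoeff_eq0 hm0.
move=> m hne; case: eqP => hm //.
rewrite mcoeffZ mcoeffX; case: eqP => [hd|]; last by rewrite mulr0.
by move/eqP: hne; case; apply: dropm_inj.
Qed.

From Stdlib Require Import Classical.

Definition dv (K : fieldType) (x : K) (k : nat) : K := x / k%:R.

Theorem mainTheorem6 (n : nat) (T Q : {mpoly R[n.+2]}) :
  (1 <= n)%N ->
  T != 0 ->
  T = subst_xv Q ->
  (forall f : {poly R}, inP n f -> inP (degx Q) (act T f)) /\
  (exists f : {poly R}, inP n f /\ ~ (size (act T f) <= degx Q)%N).
Proof.
move=> _ hT eT; subst T.
have hQ : Q != 0.
  by apply/eqP => hQ; move: hT; rewrite hQ /subst_xv comp_mpoly0 eqxx.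
split.
  by move=> f hf; rewrite /inP in hf *; rewrite act_T // expand; apply: size_expand.
have hQx := Qx_neq0 hQ.
have [c hc] : exists c, (Qx Q (degx Q)).@[c] != 0.
  apply: NNPP => hn; move/eqP: hQx; apply; apply: mpoly_vanish => v.
  by apply: NNPP => hv; apply: hn; exists v; apply/eqP.
pose f : {poly R} := \poly_(j < n.+1) (dv (c (inord j)) j`!).
have hf : (size f <= n.+1)%N by apply: size_poly.
exists f; split => // hle.
have := nth_default 0 hle.
rewrite act_T // expand coef_expand -meval_Qx.
have hcf : (fun i : 'I_n.+1 => f^`(i).[0]) =1 c.
  move=> i; rewrite horner_coef0 coef_derivn addn0 ffactnn coef_poly ltn_ord.
  rewrite inord_val /dv -(mulr_natr (c i / _)) divfK //.
  by rewrite pnatr_eq0 -lt0n fact_gt0.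
by rewrite (meval_eq _ hcf) => /eqP; rewrite (negbTE hc).
Qed.
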